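(* Let $\mathcal D=\{A_\lambda\}_{\lambda\in\Lambda}$ be a finite family of subsets of some set, with a decomposition $\Lambda=\Lambda_0\sqcup\Lambda_1\sqcup\dots\sqcup\Lambda_n$ (sets $A_\lambda$ with $\lambda\in\Lambda_r$ are said to have type $r$). Assume: (1) for any $A_{\lambda_1},A_{\lambda_2}\in\mathcal D$ of types $r_1,r_2$, $A_{\lambda_1}\cap A_{\lambda_2}$ is a finite union of sets from $\mathcal D$ of types at most $\min\{r_1,r_2\}$; (2) if $\lambda_1\ne\lambda_2$ and $A_{\lambda_1},A_{\lambda_2}$ have the same type $r$, then $A_{\lambda_1}\cap A_{\lambda_2}$ is a finite union of sets from $\mathcal D$ of types strictly less than $r$; (3) every finite union $X$ of elements of $\mathcal D$ has a unique reduced presentation $X=\bigcup_{j=1}^sA_{\lambda_j}$, i.e. one in which no $A_{\lambda_j}$ is contained in another $A_{\lambda_k}$. Let $\mathcal T$ be the family of all finite unions of elements of $\mathcal D$, and let $m:\Lambda\to\mathbb{C}$ be any function. Then there exists a unique function $\mu:\mathcal T\to\mathbb{C}$ with $\mu(A\cup B)=\mu(A)+\mu(B)-\mu(A\cap B)$ for all $A,B\in\mathcal T$ and $\mu(A_\lambda)=m(\lambda)$ for all $\lambda\in\Lambda$. *)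

(* Defs.v *)
From HB Require Import structures.
From mathcomp Require Import all_boot all_order all_algebra.
From mathcomp Require Import boolp classical_sets.
From mathcomp Require Import complex.
From mathcomp Require Import Rstruct.
From Stdlib Require Rdefinitions.

Set Implicit Arguments.
Unset Strict Implicit.
Unset Printing Implicit Defensive.

Import Order.TTheory GRing.Theory Num.Theory.
Local Open Scope ring_scope.
Local Open Scope classical_set_scope.

Definition CC : Type := complex Rdefinitions.R.

Section Family.
Variables (U : Type) (L : finType) (D : L -> set U).

Definition union_of (S : {set L}) : set U :=
  [set x | exists2 l, l \in S & D l x].

Definition fin_union_with (P : L -> Prop) (X : set U) : Prop :=
  exists S : {set L}, (forall l, l \in S -> P l) /\ X = union_of S.

Definition in_T (X : set U) : Prop := fin_union_with (fun _ => True) X.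

Definition reduced_presentation (X : set U) (S : {set L}) : Prop :=
  X = union_of S /\
  (forall j k, j \in S -> k \in S -> j != k -> ~ (D j `<=` D k)).

Definition is_valuation (m : L -> CC) (mu : set U -> CC) : Prop :=
  mu set0 = 0 /\
  (forall A B, in_T A -> in_T B ->
     mu (A `|` B) = (mu A + mu B - mu (A `&` B))) /\
  (forall l, mu (D l) = m l).

End Family.

(* Main.v *)
Require Import Defs.
From HB Require Import structures.
From mathcomp Require Import all_boot all_order all_algebra.
From mathcomp Require Import boolp classical_sets.
From mathcomp Require Import complex.
From mathcomp Require Import Rstruct ring.
Local Open Scope classical_set_scope.

Import GRing.Theory.
Set Implicit Arguments.
Unset Strict Implicit.

Lemma union1 U (L : finType) (D : L -> set U) j : union_of D [set j]%SET = D j.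
Proof.
rewrite predeqE => x; split.
  by case=> l; rewrite inE => /eqP ->.
by move=> Hx; exists j; rewrite ?inE.
Qed.

Lemma union0 U (L : finType) (D : L -> set U) : union_of D finset.set0 = set0.
Proof. by rewrite predeqE => x; split => //; case=> l; rewrite inE. Qed.

Lemma unionU U (L : finType) (D : L -> set U) S1 S2 :
  union_of D (S1 :|: S2) = union_of D S1 `|` union_of D S2.
Proof.
rewrite predeqE => x; split.
  by case=> l; rewrite inE => /orP [] H Hx; [left|right]; exists l.
by case; case=> l H Hx; exists l; rewrite // inE H ?orbT.
Qed.

Lemma reduced1 U (L : finType) (D : L -> set U) j :
  reduced_presentation D (D j) [set j]%SET.
Proof.
split; first by rewrite union1.
by move=> a b; rewrite !inE => /eqP -> /eqP ->; rewrite eqxx.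
Qed.

Lemma reduce U (L : finType) (D : L -> set U) (S : {set L}) :
  exists2 S' : {set L}, S' \subset S & reduced_presentation D (union_of D S) S'.
Proof.
have: forall n (S : {set L}), (#|S| <= n)%N ->
  exists2 S' : {set L}, S' \subset S & reduced_presentation D (union_of D S) S'.
  elim=> [|n IH] {}S HS.
    have -> : S = finset.set0 by apply/eqP; rewrite -cards_eq0 -leqn0.
    by exists finset.set0 => //; split => // j k; rewrite inE.
  case: (pselect (exists j k, [/\ j \in S, k \in S, j != k & D j `<=` D k])).
    move=> [j [k [jS kS jk Djk]]].
    have HS' : (#|S :\ j| <= n)%N.
      by move: HS; rewrite (cardsD1 j S) jS.
    have [S' sub red] := IH _ HS'.
    have E : union_of D (S :\ j) = union_of D S.
      rewrite predeqE => x; split.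
        by case=> l; rewrite inE => /andP [_ lS] Hx; exists l.
      case=> l lS Hx; case: (eqVneq l j) => [lj|lj].
        by exists k; [rewrite !inE eq_sym jk| apply: Djk; rewrite -lj].
      by exists l; rewrite // !inE lj.
    exists S'; first apply: (fintype.subset_trans sub). exact: (finset.subD1set S j).
    by rewrite -E.
  move=> Hn; exists S => //; split => // j k jS kS jk Djk.
  by apply: Hn; exists j, k.
by move=> /(_ _ S (leqnn _)).
Qed.


Lemma KL U (L : finType) (D : L -> set U)
  (H1 : forall l1 l2 : L, exists S : {set L}, D l1 `&` D l2 = union_of D S)
  (H3 : forall X : set U, in_T D X ->
     exists S : {set L}, reduced_presentation D X S /\
       forall S' : {set L}, reduced_presentation D X S' -> S' = S)
  j (S : {set L}) :
  D j `<=` union_of D S -> exists2 i, i \in S & D j `<=` D i.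
Proof.
move=> Hj.
have [f Hf] := choice (H1 j).
pose T := (\bigcup_(i in S) f i)%SET.
have E : D j = union_of D T.
  rewrite predeqE => x; split.
    move=> Hx; have [i iS Hi] := Hj x Hx.
    have : (D j `&` D i) x by [].
    rewrite Hf => -[l lf Hl]; exists l => //.
    by apply/bigcupP; exists i.
  case=> l /bigcupP [i iS lf] Hl.
  have : union_of D (f i) x by exists l.
  by rewrite -Hf => -[].
have [S' sub red] := reduce D T.
rewrite -E in red.
have [|S0 [_ uniq]] := H3 (D j).
  by exists [set j]%SET; split => //; rewrite union1.
have e1 := uniq _ red.
have e2 := uniq _ (reduced1 D j).
have : j \in T.
  apply: (fintype.subsetP sub); rewrite e1 -e2; exact: set11.
case/bigcupP => i iS jf; exists i => // x Hx.
have : union_of D (f i) x by exists j.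
by rewrite -Hf => -[].
Qed.

Lemma Dinj U (L : finType) (D : L -> set U)
  (H3 : forall X : set U, in_T D X ->
     exists S : {set L}, reduced_presentation D X S /\
       forall S' : {set L}, reduced_presentation D X S' -> S' = S)
  k l : D k = D l -> k = l.
Proof.
move=> E.
have [|S0 [_ uniq]] := H3 (D l).
  by exists [set l]%SET; split => //; rewrite union1.
have e1 := uniq _ (reduced1 D l).
have e2 : reduced_presentation D (D l) [set k]%SET by rewrite -E; exact: reduced1.
by apply: set1_inj; rewrite (uniq _ e2) e1.
Qed.

Lemma Dne U (L : finType) (D : L -> set U)
  (H3 : forall X : set U, in_T D X ->
     exists S : {set L}, reduced_presentation D X S /\
       forall S' : {set L}, reduced_presentation D X S' -> S' = S)
  l : D l <> set0.
Proof.
move=> E.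
have [|S0 [_ uniq]] := H3 set0.
  by exists finset.set0; split => //; rewrite union0.
have e1 : reduced_presentation D set0 finset.set0.
  by split; [rewrite union0 | move=> j k; rewrite inE].
have e2 : reduced_presentation D set0 [set l]%SET by rewrite -E; exact: reduced1.
have := set11 l; rewrite (uniq _ e2) -(uniq _ e1).
by rewrite inE.
Qed.

Lemma in_TI U (L : finType) (D : L -> set U)
  (H1 : forall l1 l2 : L, exists S : {set L}, D l1 `&` D l2 = union_of D S)
  A B : in_T D A -> in_T D B -> in_T D (A `&` B).
Proof.
move=> [SA [_ ->]] [SB [_ ->]].
have [f Hf] := choice (fun p : L * L => H1 p.1 p.2).
exists (\bigcup_(i in SA) \bigcup_(j in SB) f (i, j))%SET; split => //.
rewrite predeqE => x; split.
  move=> [[i iS Hi] [j jS Hj]].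
  have : (D (i, j).1 `&` D (i, j).2) x by [].
  rewrite Hf => -[l lf Hl]; exists l => //.
  by apply/bigcupP; exists i => //; apply/bigcupP; exists j.
case=> l /bigcupP [i iS /bigcupP [j jS lf]] Hl.
have : union_of D (f (i, j)) x by exists l.
by rewrite -Hf => -[Hi Hj]; split; [exists i | exists j].
Qed.

Definition NN U (L : finType) (D : L -> set U) (X : set U) :=
  #|[set k | `[< D k `<=` X >] ]%SET|.

Lemma NN_le U (L : finType) (D : L -> set U) A B :
  A `<=` B -> (NN D A <= NN D B)%N.
Proof.
move=> AB; apply: subset_leq_card; apply/fintype.subsetP => k.
rewrite !inE => H x /H; exact: AB.
Qed.

Lemma NN_lt U (L : finType) (D : L -> set U) A B i :
  A `<=` B -> D i `<=` B -> ~ D i `<=` A -> (NN D A < NN D B)%N.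
Proof.
move=> AB iB iA; apply: proper_card; apply/properP; split.
  apply/fintype.subsetP => k.
  rewrite !inE => H x /H; exact: AB.
by exists i; rewrite !inE //; apply/negP => /asboolP.
Qed.

Fixpoint wf U (L : finType) (D : L -> set U) (m : L -> CC) (f : nat) (l : L)
  {struct f} : CC :=
  match f with
  | 0 => 0%R
  | f'.+1 => (m l - \sum_(k | (k != l) && `[< D k `<=` D l >]) wf D m f' k)%R
  end.

Lemma rank_lt U (L : finType) (D : L -> set U)
  (inj : forall k l, D k = D l -> k = l) k l :
  k != l -> D k `<=` D l -> (NN D (D k) < NN D (D l))%N.
Proof.
move=> kl kD; apply: (NN_lt (i := l)) => // H.
by move/eqP: kl; apply; apply: inj; rewrite eqEsubset.
Qed.

Lemma wf_stab U (L : finType) (D : L -> set U) (m : L -> CC)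
  (inj : forall k l, D k = D l -> k = l) f :
  forall l g, (NN D (D l) <= f)%N -> (f <= g)%N -> wf D m g l = wf D m f l.
Proof.
elim: f => [|f IH] l g Hl Hg.
  exfalso; move: Hl; rewrite leqn0 => /eqP /card0_eq /(_ l).
  by rewrite !inE => /negbT /negP; apply; apply/asboolP.
case: g Hg => [//|g] Hg /=.
congr (_ - _)%R; apply: eq_bigr => k /andP [kl /asboolP kD].
apply: IH => //.
by rewrite -ltnS; apply: leq_trans Hl; apply: rank_lt.
Qed.

Lemma sum_or (I : finType) (a b : pred I) (F : I -> CC) :
  (\sum_(i | a i || b i) F i = \sum_(i | a i) F i + \sum_(i | b i) F i
     - \sum_(i | a i && b i) F i)%R.
Proof.
have e1 : (\sum_(i | a i || b i) F i = \sum_(i | a i) F i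
            + \sum_(i | b i && ~~ a i) F i)%R.
  rewrite (bigID a) /=; congr (_ + _)%R; apply: eq_bigl => i;
  by case: (a i); case: (b i).
have e2 : (\sum_(i | b i) F i = \sum_(i | a i && b i) F i
            + \sum_(i | b i && ~~ a i) F i)%R.
  rewrite (bigID a) /=; congr (_ + _)%R; apply: eq_bigl => i;
  by case: (a i); case: (b i).
rewrite e1 e2; ring.
Qed.

Unset Implicit Arguments.
Set Strict Implicit.

Theorem lemma2p2p2 (U : Type) (L : finType) (D : L -> set U) (n : nat)
  (typ : L -> 'I_n.+1)
  (H1 : forall l1 l2 : L,
     fin_union_with D (fun l => (typ l <= minn (typ l1) (typ l2))%N)
                    (D l1 `&` D l2))
  (H2 : forall l1 l2 : L, l1 != l2 -> typ l1 = typ l2 ->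
     fin_union_with D (fun l => (typ l < typ l1)%N) (D l1 `&` D l2))
  (H3 : forall X : set U, in_T D X ->
     exists S : {set L}, reduced_presentation D X S /\
       forall S' : {set L}, reduced_presentation D X S' -> S' = S)
  (m : L -> CC) :
  exists mu : set U -> CC, is_valuation D m mu /\
    forall mu' : set U -> CC, is_valuation D m mu' ->
      forall X : set U, in_T D X -> mu' X = mu X.
Proof.
have H1' : forall l1 l2 : L, exists S : {set L}, D l1 `&` D l2 = union_of D S.
  by move=> l1 l2; have [S [_ E]] := H1 l1 l2; exists S.
have inj := Dinj H3.
have ne := Dne H3.
pose w l := wf D m #|L| l.
have wE : forall l, m l = (\sum_(k | `[< D k `<=` D l >]) w k)%R.
  move=> l; rewrite (bigD1 l) /=; last by apply/asboolP.
  rewrite /w -(@wf_stab _ _ D m inj #|L| l #|L|.+1) //=; last exact: max_card.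
  rewrite [X in (_ - X + _)%R](eq_bigl (fun k => `[< D k `<=` D l >] && (k != l))).
    by rewrite GRing.subrK.
  by move=> k; rewrite andbC.
pose mu X := (\sum_(k | `[< D k `<=` X >]) w k)%R.
have val : is_valuation D m mu.
  split; [|split].
  - apply: big_pred0 => k; apply/asboolP => Hk; apply: (ne k).
    by rewrite predeqE => x; split => // /Hk.
  - move=> A B HA HB.
    have eU : forall k, `[< D k `<=` A `|` B >] =
                        `[< D k `<=` A >] || `[< D k `<=` B >].
      move=> k; apply/asboolP/orP.
        case: HA => SA [_ EA]; case: HB => SB [_ EB].
        rewrite EA EB -unionU => Hk.
        have [p pS Hp] := KL H1' H3 Hk.
        move: pS; rewrite inE => /orP [] pS; [left|right]; apply/asboolP => x /Hp Hx;
        by exists p.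
      by case=> /asboolP H x /H; [left|right].
    have eI : forall k, `[< D k `<=` A `&` B >] =
                        `[< D k `<=` A >] && `[< D k `<=` B >].
      move=> k; apply/asboolP/andP.
        by move=> H; split; apply/asboolP => x /H [].
      by case=> /asboolP Ha /asboolP Hb x Hx; split; [apply: Ha|apply: Hb].
    rewrite /mu (eq_bigl _ _ eU) (eq_bigl _ _ eI).
    exact: sum_or.
  - by move=> l; rewrite wE.
have uniq : forall mu1 mu2, is_valuation D m mu1 -> is_valuation D m mu2 ->
    forall k X, (NN D X < k)%N -> in_T D X -> mu1 X = mu2 X.
  move=> mu1 mu2 [z1 [a1 d1]] [z2 [a2 d2]].
  elim=> [//|k IH] X XN [S0 [_ EX]].
  have [S _ [E red]] := reduce D S0.
  subst X; rewrite E in XN *.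
  have XN' : (NN D (union_of D S) <= k)%N by move: XN; rewrite ltnS.
  case: (set_0Vmem S) => [S0e | [j jS]].
    by rewrite S0e union0 z1 z2.
  have eX : union_of D S = D j `|` union_of D (S :\ j).
    by rewrite -(union1 D j) -unionU finset.setD1K.
  have inTD : forall l, in_T D (D l).
    by move=> l; exists [set l]%SET; split => //; rewrite union1.
  have inTY : in_T D (union_of D (S :\ j)) by exists (S :\ j).
  case: (set_0Vmem (S :\ j)) => [Se | [i /setD1P [ij iS]]].
    by rewrite eX Se union0 setU0 d1 d2.
  have Nj : (NN D (D j) < NN D (union_of D S))%N.
    apply: (NN_lt (i := i)).
    - by move=> x Hx; exists j.
    - by move=> x Hx; exists i.
    - exact: (red i j iS jS ij).
  have NY : (NN D (union_of D (S :\ j)) < NN D (union_of D S))%N.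
    apply: (NN_lt (i := j)).
    - by move=> x [l /setD1P [_ lS] Hx]; exists l.
    - by move=> x Hx; exists j.
    - move=> Hk; have [i' /setD1P [i'j i'S] Hi'] := KL H1' H3 Hk.
      by apply: (red j i' jS i'S) => //; rewrite eq_sym.
  have NI : (NN D (D j `&` union_of D (S :\ j)) <= NN D (D j))%N.
    by apply: NN_le => x [].
  rewrite eX a1 ?a2 //; try exact: inTD.
  rewrite (IH (D j)) ?(IH (union_of D (S :\ j)))
          ?(IH (D j `&` union_of D (S :\ j))) //.
  - exact: leq_trans (leq_ltn_trans NI Nj) XN'.
  - exact (in_TI H1' (inTD j) inTY).
  - exact: leq_trans NY XN'.
  - exact: leq_trans Nj XN'.
exists mu; split => // mu' H' X HX.
exact: (uniq _ _ H' val (NN D X).+1 X (ltnSn _) HX).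
Qed.
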